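(* There is a finitary argumentation framework $\mathcal{F}$ with $\mathit{tfstg2}(\mathcal{F})=\emptyset$, i.e., with no $\mathit{tfstg2}$ extension.
   Context: An argumentation framework (AF) is a pair $\mathcal{F}=(A_{\mathcal{F}},R_{\mathcal{F}})$ with $R_{\mathcal{F}}\subseteq A_{\mathcal{F}}\times A_{\mathcal{F}}$; write $a\rightarrow b$ for $(a,b)\in R_{\mathcal{F}}$. $\mathcal{F}$ is finitary if every argument is attacked by only finitely many arguments. For $S\subseteq A_{\mathcal{F}}$, $\mathcal{F}|_S=(A_{\mathcal{F}}\cap S,R_{\mathcal{F}}\cap(S\times S))$; $S$ is conflict-free if no $a,b\in S$ have $a\rightarrow b$; $S^\oplus=S\cup\{x:\exists y\in S,\ y\rightarrow x\}$; a stage extension is a conflict-free $S$ such that no conflict-free $T$ has $S^\oplus\subsetneq T^\oplus$. $\mathrm{SCC}(a)$ is the set of $b$ with directed attack paths (possibly of length 0) from $a$ to $b$ and from $b$ to $a$. For $X,S\subseteq A_{\mathcal{F}}$, $D_S(X)=\{b\in X:\exists a\in S\setminus X,\ a\rightarrow b\}$. For $S\subseteq A_{\mathcal{F}}$, $a\in A_{\mathcal{F}}$ and ordinals $\alpha$: $C^0_S(a)=\mathrm{SCC}(a)$; $C^{\alpha+1}_S(a)$ = the strongly connected component of $a$ in $\mathcal{F}|_{C^\alpha_S(a)\setminus D_S(C^\alpha_S(a))}$ (empty if $a$ is not in that set); for limit $\lambda$, $C^\lambda_S(a)$ = the strongly connected component of $a$ in $\mathcal{F}|_{\bigcap_{\alpha<\lambda}C^\alpha_S(a)}$.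 $\alpha_S(a)$ is the least $\alpha$ with $a\notin C^\alpha_S(a)$ or $C^{\alpha+1}_S(a)=C^\alpha_S(a)$. $S\in\mathit{tfstg2}(\mathcal{F})$ iff $S$ is conflict-free and for each $a\in A_{\mathcal{F}}$, either $a\notin C^{\alpha_S(a)}_S(a)$ or $S\cap C^{\alpha_S(a)}_S(a)$ is a stage extension of $\mathcal{F}|_{C^{\alpha_S(a)}_S(a)}$. *)

(* Defs.v *)
(* Argumentation frameworks over an ambient carrier type U:
   an AF is a pair (A, R) with A : U -> Prop the set of arguments and
   R : U -> U -> Prop the attack relation, R included in A x A. *)
From Stdlib Require Import List Relations.

Section AF.
Variable U : Type.

Definition subset (X Y : U -> Prop) : Prop := forall x, X x -> Y x.
Definition set_eq (X Y : U -> Prop) : Prop := forall x, X x <-> Y x.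
Definition strict_subset (X Y : U -> Prop) : Prop :=
  subset X Y /\ ~ subset Y X.

Definition is_AF (A : U -> Prop) (R : U -> U -> Prop) : Prop :=
  forall a b, R a b -> A a /\ A b.

Definition finitary (A : U -> Prop) (R : U -> U -> Prop) : Prop :=
  forall b, A b -> exists l : list U, forall a, R a b -> In a l.

Definition restrA (A S : U -> Prop) : U -> Prop := fun x => A x /\ S x.
Definition restrR (R : U -> U -> Prop) (S : U -> Prop) : U -> U -> Prop :=
  fun x y => R x y /\ S x /\ S y.

Definition conflict_free (R : U -> U -> Prop) (S : U -> Prop) : Prop :=
  forall a b, S a -> S b -> ~ R a b.

Definition plus (R : U -> U -> Prop) (S : U -> Prop) : U -> Prop :=
  fun x => S x \/ exists y, S y /\ R y x.

Definition stage_ext (A : U -> Prop) (R : U -> U -> Prop) (S : U -> Prop) : Prop :=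
  subset S A /\ conflict_free R S /\
  ~ (exists T, subset T A /\ conflict_free R T /\
               strict_subset (plus R S) (plus R T)).

Definition SCC (A : U -> Prop) (R : U -> U -> Prop) (a : U) : U -> Prop :=
  fun b => A a /\ A b /\ clos_refl_trans U R a b /\ clos_refl_trans U R b a.

Definition Dset (R : U -> U -> Prop) (S X : U -> Prop) : U -> Prop :=
  fun b => X b /\ exists a, S a /\ ~ X a /\ R a b.

Definition Cstep (A : U -> Prop) (R : U -> U -> Prop) (S : U -> Prop) (a : U)
  (X : U -> Prop) : U -> Prop :=
  let Y := fun x => X x /\ ~ Dset R S X x in
  SCC (restrA A Y) (restrR R Y) a.

(* The sets C^alpha_S(a), alpha an ordinal, as an inductive family:
   C^0, successors, and limit stages (SCC of a in F restricted to the
   intersection of a nonempty family of earlier stages). *)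
Inductive Cstage (A : U -> Prop) (R : U -> U -> Prop) (S : U -> Prop) (a : U)
  : (U -> Prop) -> Prop :=
| Cstage0 : Cstage A R S a (SCC A R a)
| CstageS : forall X, Cstage A R S a X -> Cstage A R S a (Cstep A R S a X)
| CstageL : forall K : (U -> Prop) -> Prop,
    (exists X, K X) ->
    (forall X, K X -> Cstage A R S a X) ->
    let I := fun x => forall X, K X -> X x in
    Cstage A R S a (SCC (restrA A I) (restrR R I) a).

Definition Cstop (A : U -> Prop) (R : U -> U -> Prop) (S : U -> Prop) (a : U)
  (X : U -> Prop) : Prop :=
  ~ X a \/ set_eq (Cstep A R S a X) X.

(* X = C^{alpha_S(a)}_S(a): the first stage (the stages decrease) satisfying
   the stopping condition; no strictly larger (= earlier) stage satisfies it. *)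
Definition Cfinal (A : U -> Prop) (R : U -> U -> Prop) (S : U -> Prop) (a : U)
  (X : U -> Prop) : Prop :=
  Cstage A R S a X /\ Cstop A R S a X /\
  forall Y, Cstage A R S a Y -> strict_subset X Y -> ~ Cstop A R S a Y.

Definition tfstg2 (A : U -> Prop) (R : U -> U -> Prop) (S : U -> Prop) : Prop :=
  subset S A /\ conflict_free R S /\
  forall a, A a -> forall X, Cfinal A R S a X ->
    ~ X a \/ stage_ext (restrA A X) (restrR R X) (fun x => S x /\ X x).

End AF.

Arguments subset {U}. Arguments set_eq {U}. Arguments strict_subset {U}.
Arguments is_AF {U}. Arguments finitary {U}. Arguments restrA {U}.
Arguments restrR {U}. Arguments conflict_free {U}. Arguments plus {U}.
Arguments stage_ext {U}. Arguments SCC {U}. Arguments Dset {U}.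
Arguments Cstep {U}. Arguments Cstage {U}. Arguments Cstop {U}.
Arguments Cfinal {U}. Arguments tfstg2 {U}.

(* Main.v *)
Require Import Defs.
From Stdlib Require Import List Relations Classical Lia Arith PeanoNat.
Import ListNotations.


Section Gen.
Variable U : Type.
Variable R : U -> U -> Prop.
Let A : U -> Prop := fun _ => True.

Lemma seq_refl (X : U -> Prop) : set_eq X X.
Proof. intro; tauto. Qed.
Lemma seq_sym (X Y : U -> Prop) : set_eq X Y -> set_eq Y X.
Proof. intros H x; specialize (H x); tauto. Qed.
Lemma seq_trans (X Y Z : U -> Prop) : set_eq X Y -> set_eq Y Z -> set_eq X Z.
Proof. intros H1 H2 x; specialize (H1 x); specialize (H2 x); tauto. Qed.

Lemma rt_mono (R1 R2 : U -> U -> Prop) : (forall x y, R1 x y -> R2 x y) ->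
  forall a b, clos_refl_trans U R1 a b -> clos_refl_trans U R2 a b.
Proof.
  intros H a b Hab; induction Hab.
  - apply rt_step; auto.
  - apply rt_refl.
  - eapply rt_trans; eauto.
Qed.

Lemma restr_mono (X Y : U -> Prop) : subset X Y ->
  forall a b, clos_refl_trans U (restrR R X) a b -> clos_refl_trans U (restrR R Y) a b.
Proof.
  intros H; apply rt_mono. intros x y [h1 [h2 h3]]; repeat split; auto.
Qed.

Lemma SCC_ext (X Y : U -> Prop) a : set_eq X Y ->
  set_eq (SCC (restrA A X) (restrR R X) a) (SCC (restrA A Y) (restrR R Y) a).
Proof.
  intros H b; unfold SCC, restrA.
  assert (subset X Y) by (intros x; apply H).
  assert (subset Y X) by (intros x; apply H).
  split; intros [h1 [h2 [h3 h4]]]; repeat split; try tauto;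
    try (apply H; tauto); eapply restr_mono; eauto.
Qed.

Lemma Dset_ext (E X Y : U -> Prop) : set_eq X Y -> set_eq (Dset R E X) (Dset R E Y).
Proof.
  intros H b; unfold Dset; split; intros [h1 [c [h2 [h3 h4]]]];
    (split; [apply H; auto | exists c; repeat split; auto; rewrite ?(H c) in *; auto]);
    intro; apply h3; apply H; auto.
Qed.

Lemma Cstep_ext E a (X Y : U -> Prop) : set_eq X Y ->
  set_eq (Cstep A R E a X) (Cstep A R E a Y).
Proof.
  intros H. unfold Cstep. apply SCC_ext.
  intros x. pose proof (Dset_ext E X Y H x). specialize (H x). tauto.
Qed.

Lemma Cstep_sub E a X b : Cstep A R E a X b -> X b.
Proof. unfold Cstep, SCC, restrA. tauto. Qed.

Lemma no_in (Rel : U -> U -> Prop) x a : (forall y, ~ Rel y a) ->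
  clos_refl_trans U Rel x a -> x = a.
Proof.
  intros H Hp. apply clos_rt_rtn1 in Hp. destruct Hp; auto. exfalso; eapply H; eauto.
Qed.

Lemma back_closed (Rel : U -> U -> Prop) (B : U -> Prop) x a :
  (forall u v, Rel u v -> B v -> B u) -> B a -> clos_refl_trans U Rel x a -> B x.
Proof.
  intros H Ha Hp. apply clos_rt_rt1n in Hp. induction Hp; eauto.
Qed.

Lemma scc_explicit (X : U -> Prop) a : X a ->
  (forall b, X b -> clos_refl_trans U (restrR R X) a b /\ clos_refl_trans U (restrR R X) b a) ->
  set_eq (SCC (restrA A X) (restrR R X) a) X.
Proof.
  intros Ha H b; unfold SCC, restrA, A; split.
  - tauto.
  - intros Hb; destruct (H b Hb); tauto.
Qed.

Lemma Cstep_eq E a (X X' : U -> Prop) :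
  (forall b, X' b -> X b /\ ~ Dset R E X b) ->
  X' a ->
  (forall b, X' b -> clos_refl_trans U (restrR R X') a b /\ clos_refl_trans U (restrR R X') b a) ->
  (forall b, Cstep A R E a X b -> X' b) ->
  set_eq (Cstep A R E a X) X'.
Proof.
  intros h1 h2 h3 h4 b; split; auto.
  intros Hb. unfold Cstep, SCC, restrA, A.
  destruct (h3 b Hb) as [p q].
  assert (subset X' (fun x => X x /\ ~ Dset R E X x)) by (intros x; apply h1).
  repeat split; auto; try apply h1; auto; eapply restr_mono; eauto.
Qed.

Lemma stage_sub E a Y : Cstage A R E a Y -> subset Y (SCC A R a).
Proof.
  intros H; induction H.
  - intros x; auto.
  - intros x Hx; apply IHCstage; eapply Cstep_sub; eauto.
  - intros x Hx. destruct H as [X0 HX0]. apply (H1 X0 HX0).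
    unfold SCC, restrA in Hx. destruct Hx as [_ [[_ Hx] _]]. apply Hx; auto.
Qed.

Lemma max_nat (P : nat -> Prop) n : (exists l, P l) -> (forall l, P l -> l <= n) ->
  exists l, P l /\ forall l', P l' -> l' <= l.
Proof.
  revert P. induction n; intros P [l Hl] Hb.
  - exists l; split; auto. intros l' H'. pose proof (Hb l' H'). pose proof (Hb l Hl). lia.
  - destruct (classic (P (S n))) as [Hs | Hs].
    + exists (S n); split; auto.
    + apply IHn.
      * exists l; auto.
      * intros l' H'. specialize (Hb l' H'). destruct (Nat.eq_dec l' (S n)); subst; [contradiction|lia].
Qed.

Fixpoint iterC E a (l : nat) : U -> Prop :=
  match l with 0 => SCC A R a | S l' => Cstep A R E a (iterC E a l') end.

Lemma iterC_stage E a l : Cstage A R E a (iterC E a l).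
Proof. induction l; simpl; constructor; auto. Qed.

Lemma chain_final E a (X : nat -> U -> Prop) (n : nat) :
  set_eq (X 0) (SCC A R a) ->
  (forall l, l < n -> set_eq (Cstep A R E a (X l)) (X (S l))) ->
  set_eq (Cstep A R E a (X n)) (X n) ->
  (forall l, l < n -> ~ set_eq (X (S l)) (X l)) ->
  (forall l, l <= n -> set_eq (SCC (restrA A (X l)) (restrR R (X l)) a) (X l)) ->
  X n a ->
  exists Xf, Cfinal A R E a Xf /\ set_eq Xf (X n).
Proof.
  intros c0 cS cstop cdec ccl ca.
  assert (Hit : forall l, l <= n -> set_eq (iterC E a l) (X l)).
  { induction l; intros Hl; simpl.
    - apply seq_sym; auto.
    - eapply seq_trans; [apply Cstep_ext, IHl; lia|]. apply cS; lia. }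
  assert (Hdec1 : forall l, l < n -> subset (X (S l)) (X l)).
  { intros l Hl x Hx. apply (cS l Hl) in Hx. eapply Cstep_sub; eauto. }
  assert (Hdec : forall l l', l <= l' -> l' <= n -> subset (X l') (X l)).
  { intros l l' H1 H2. induction H1.
    - intros x; auto.
    - intros x Hx. apply IHle; [lia|]. apply Hdec1; auto; lia. }
  assert (Hchar : forall Y, Cstage A R E a Y -> exists l, l <= n /\ set_eq Y (X l)).
  { intros Y HY; induction HY.
    - exists 0; split; [lia|]. apply seq_sym; auto.
    - destruct IHHY as [l [Hl HXl]].
      destruct (Nat.eq_dec l n) as [->|Hne].
      + exists n; split; auto. eapply seq_trans; [apply Cstep_ext; eauto|]. auto.
      + exists (S l); split; [lia|]. eapply seq_trans; [apply Cstep_ext; eauto|]. apply cS; lia.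
    - set (P := fun l => l <= n /\ exists Z, K Z /\ set_eq Z (X l)).
      destruct (max_nat P n) as [ls [[Hls [Zs [HKs HZs]]] Hmax]].
      { destruct H as [Z HZ]. destruct (H1 Z HZ) as [l [Hl HZl]]. exists l; split; auto. exists Z; auto. }
      { intros l [Hl _]; auto. }
      exists ls; split; auto. simpl.
      eapply seq_trans; [|apply (ccl ls Hls)].
      apply SCC_ext. intros x; split.
      + intros Hx. apply HZs. apply Hx; auto.
      + intros Hx Z HZ. destruct (H1 Z HZ) as [l [Hl HZl]].
        apply HZl. apply (Hdec l ls); auto.
        apply Hmax. split; auto. exists Z; auto. }
  exists (iterC E a n). split; [|apply Hit; lia].
  split; [apply iterC_stage|]. split.
  - right. eapply seq_trans; [apply Cstep_ext, Hit; lia|].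
    eapply seq_trans; [apply cstop|]. apply seq_sym, Hit; lia.
  - intros Y HY [Hs Hns] Hstop.
    destruct (Hchar Y HY) as [l [Hl HYl]].
    destruct (Nat.eq_dec l n) as [->|Hne].
    + apply Hns. intros x Hx. apply (Hit n (le_n n)). apply HYl; auto.
    + assert (l < n) by lia.
      destruct Hstop as [Hna | Heq].
      * apply Hna. apply HYl. apply (Hdec l n); auto.
      * apply (cdec l H).
        eapply seq_trans; [apply seq_sym, cS; auto|].
        eapply seq_trans; [apply Cstep_ext, seq_sym, HYl|].
        eapply seq_trans; [apply Heq|]. auto.
Qed.

End Gen.


Inductive node : Type :=
| Yn (i : nat) | Tn (i : nat) | Gn (i k : nat) | Hn (i k : nat) | Nn (j : nat).

Definition RR (x y : node) : Prop :=
  match x with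
  | Yn i => match y with Gn i' _ => i' = i | Nn j => j = i | _ => False end
  | Tn i => match y with Tn i' => i' = i | Gn i' k => i' = i /\ k = 0 | _ => False end
  | Gn i k => match y with
      | Hn i' k' => i' = i /\ S k' = k
      | Yn i' => i' = i /\ k = 0
      | Tn i' => i' = i /\ k = 0
      | _ => False end
  | Hn i k => match y with Gn i' k' => i' = i /\ k' = k | _ => False end
  | Nn j => match y with Gn i k => j = S (i + k) | _ => False end
  end.

Definition AA : node -> Prop := fun _ => True.

Definition lev (x : node) : nat :=
  match x with Yn i | Tn i | Gn i _ | Hn i _ => 2 * i + 1 | Nn j => 2 * j end.

Lemma RR_lev x y : RR x y -> lev y <= lev x.
Proof. destruct x, y; simpl; intuition; subst; lia. Qed.

Lemma rt_lev x y : clos_refl_trans node RR x y -> lev y <= lev x.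
Proof. induction 1; auto using RR_lev; lia. Qed.

Definition lt_o (k : nat) (o : option nat) : Prop :=
  match o with None => True | Some r => k < r end.

Lemma lt_o_S k o : lt_o (S k) o -> lt_o k o.
Proof. destruct o; simpl; auto; lia. Qed.

Definition Qo (i : nat) (o : option nat) (x : node) : Prop :=
  match x with
  | Yn i' => i' = i
  | Tn i' => i' = i /\ lt_o 0 o
  | Gn i' k => i' = i /\ lt_o k o
  | Hn i' k => i' = i /\ lt_o (S k) o
  | Nn _ => False
  end.

Ltac edge := apply rt_step; repeat split; simpl; auto; try (apply lt_o_S; assumption).

Lemma g_to_y i o k : lt_o k o -> clos_refl_trans node (restrR RR (Qo i o)) (Gn i k) (Yn i).
Proof.
  induction k; intros Hk.
  - edge.
  - eapply rt_trans with (Hn i k); [edge|].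
    eapply rt_trans with (Gn i k); [edge|].
    apply IHk. apply lt_o_S; auto.
Qed.

Lemma Qo_paths i o b : Qo i o b ->
  clos_refl_trans node (restrR RR (Qo i o)) (Yn i) b /\
  clos_refl_trans node (restrR RR (Qo i o)) b (Yn i).
Proof.
  destruct b; simpl; intros H; try destruct H; subst.
  - split; apply rt_refl.
  - split.
    + eapply rt_trans with (Gn i 0); edge.
    + eapply rt_trans with (Gn i 0); [edge|]. apply g_to_y; auto.
  - split; [edge|]. apply g_to_y; auto.
  - split.
    + eapply rt_trans with (Gn i (S k)); edge.
    + eapply rt_trans with (Gn i k); [edge|]. apply g_to_y, lt_o_S; auto.
Qed.

Lemma Qo_scc i o a : Qo i o a ->
  set_eq (SCC (restrA AA (Qo i o)) (restrR RR (Qo i o)) a) (Qo i o).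
Proof.
  intros Ha. apply (scc_explicit node RR).
  - auto.
  - intros b Hb. destruct (Qo_paths i o a Ha), (Qo_paths i o b Hb).
    split; eapply rt_trans; eauto.
Qed.

Lemma full_scc i a : Qo i None a -> set_eq (SCC AA RR a) (Qo i None).
Proof.
  intros Ha b. split.
  - intros [_ [_ [h1 h2]]]. apply rt_lev in h1. apply rt_lev in h2.
    destruct a; simpl in Ha; try contradiction; try (destruct Ha as [Ha _]); subst;
    destruct b; simpl in *; auto; lia.
  - intros Hb. destruct (Qo_paths i None a Ha), (Qo_paths i None b Hb).
    assert (forall x y, clos_refl_trans node (restrR RR (Qo i None)) x y -> clos_refl_trans node RR x y).
    { apply rt_mono. intros x y [h _]; auto. }
    unfold SCC, AA; repeat split; auto; eapply rt_trans; eauto.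
Qed.

Definition single (a : node) : node -> Prop := fun x => x = a.

Lemma single_scc a : set_eq (SCC (restrA AA (single a)) (restrR RR (single a)) a) (single a).
Proof.
  apply (scc_explicit node RR). reflexivity.
  intros b Hb; rewrite Hb; split; apply rt_refl.
Qed.

Lemma single_stop E a : (forall c, RR c a -> c <> a -> ~ E c) ->
  set_eq (Cstep AA RR E a (single a)) (single a).
Proof.
  intros H. apply (Cstep_eq node RR).
  - intros b Hb; split; auto. intros [_ [c [h1 [h2 h3]]]]. unfold single in *; subst.
    eapply H; eauto.
  - reflexivity.
  - intros b Hb; rewrite Hb; split; apply rt_refl.
  - intros b Hb. eapply Cstep_sub; eauto.
Qed.

Lemma singleton_in E a X : tfstg2 AA RR E -> Cfinal AA RR E a X -> X a ->
  (forall x, X x -> x = a) -> ~ RR a a -> E a.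
Proof.
  intros [_ [_ Htf]] Hfin Ha Hsing Hnr.
  destruct (Htf a I X Hfin) as [Hn | [_ [_ Hnot]]]; [contradiction|].
  apply NNPP; intros HnE. apply Hnot. exists (fun x => x = a). split; [|split].
  - intros x ->. split; [exact I|auto].
  - intros x y -> -> [h _]; auto.
  - split.
    + intros x [[Ex Xx] | [y [[Ey Xy] _]]]; exfalso; apply HnE.
      * rewrite <- (Hsing x Xx); auto.
      * rewrite <- (Hsing y Xy); auto.
    + intros Hs. destruct (Hs a (or_introl eq_refl)) as [[Ea _] | [y [[Ey Xy] _]]]; apply HnE; auto.
      rewrite <- (Hsing y Xy); auto.
Qed.


Section Cascade.
Variable E : node -> Prop.
Hypothesis Hcf : conflict_free RR E.
Variables i m : nat.
Hypothesis Hcut : E (Nn (S (i+m))).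
Hypothesis Hlow : forall k, k < m -> ~ E (Nn (S (i+k))).

Local Notation Q r := (Qo i (Some r)).
Local Notation Zs := (Qo i None).

Ltac elim_idx := repeat match goal with
  | H : ?x = i |- _ => is_var x; tryif constr_eq x i then fail else subst x
  | H : i = ?x |- _ => is_var x; tryif constr_eq x i then fail else subst x
  end.

Lemma C1 a : Q m a -> set_eq (Cstep AA RR E a Zs) (Q m).
Proof.
  intros Ha. apply (Cstep_eq node RR).
  - intros b Hb. split.
    + destruct b; simpl in *; intuition.
    + intros [_ [c [Ec [nZc Rcb]]]].
      destruct c, b; simpl in *; intuition; subst; try (apply nZc; auto; fail).
      all: try (eapply Hlow; eauto; fail).
      all: try (match goal with H : _ -> _ -> False |- _ => apply H; auto; fail end).
      all: try (match goal with H : _ -> False |- _ => apply H; auto; fail end).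

  - auto.
  - intros b Hb. destruct (Qo_paths i _ a Ha), (Qo_paths i _ b Hb).
    split; eapply rt_trans; eauto.
  - intros b Hb. unfold Cstep, SCC, restrA in Hb.
    destruct Hb as [_ [[_ [Zb nDb]] [Hab Hba]]].
    set (Yk := fun x => Zs x /\ x <> Gn i m).
    assert (Hsub : subset (fun x => Zs x /\ ~ Dset RR E Zs x) Yk).
    { intros x [Zx nDx]; split; auto. intros ->. apply nDx. split; auto.
      exists (Nn (S (i + m))); simpl; auto. }
    apply (restr_mono node RR _ _ Hsub) in Hab.
    apply (restr_mono node RR _ _ Hsub) in Hba.
    set (B := fun x => Q m x \/ (1 <= m /\ x = Hn i (m - 1))).
    assert (HB : B b).
    { apply (back_closed node (restrR RR Yk) B b a); [|left; auto|auto].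
      intros u v [Ruv [[Zu Nu] Yv]] Bv. unfold B in *.
      destruct Bv as [Bv | [Hm ->]].
      - destruct u, v; simpl in Ruv, Bv, Zu |- *; try contradiction;
          decompose [and] Ruv; decompose [and] Bv; subst.
        all: try (left; repeat split; auto; lia).
        + destruct m; [exfalso; apply Nu; reflexivity|left; split; auto; lia].
        + destruct (Nat.eq_dec (S k) m) as [e|e];
            [right; split; [lia|]; f_equal; lia | left; split; auto; lia].
      - destruct u; simpl in Ruv; try contradiction. destruct Ruv as [-> e].
        exfalso; apply Nu. f_equal; lia. }
    destruct HB as [HB | [Hm ->]]; auto.
    apply (no_in node) in Hab.
    + subst. unfold Q in Ha; simpl in Ha. lia.
    + intros y [Ry [Yy _]]. destruct y; simpl in Ry; try contradiction.
      destruct Ry; subst. apply Yy. f_equal. lia.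
Qed.

Lemma C2 : 1 <= m -> set_eq (Cstep AA RR E (Hn i (m - 1)) Zs) (single (Hn i (m - 1))).
Proof.
  intros Hm. apply (Cstep_eq node RR).
  - intros b ->. split; [simpl; auto|].
    intros [_ [c [Ec [nZc Rcb]]]]. destruct c; simpl in Rcb; try contradiction.
    destruct Rcb; subst; apply nZc; simpl; auto.
  - reflexivity.
  - intros b ->; split; apply rt_refl.
  - intros b Hb. unfold Cstep, SCC, restrA in Hb.
    destruct Hb as [_ [_ [_ Hba]]]. apply (no_in node) in Hba; auto.
    intros y [Ry [[Zy nDy] _]]. destruct y; simpl in Ry; try contradiction.
    destruct Ry as [e0 e]; elim_idx. apply nDy. split; [simpl; auto|].
    exists (Nn (S (i + m))). simpl. repeat split; auto. lia.
Qed.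

Lemma C3 r0 a : r0 < m -> E (Hn i r0) -> Q r0 a ->
  set_eq (Cstep AA RR E a (Q (S r0))) (Q r0).
Proof.
  intros Hr HS Ha. apply (Cstep_eq node RR).
  - intros b Hb. split.
    + destruct b; simpl in *; intuition.
    + intros [_ [c [Ec [nZc Rcb]]]].
      destruct c, b; simpl in Rcb, Hb, nZc; try contradiction; decompose [and] Rcb; decompose [and] Hb; subst.
      all: try (apply nZc; repeat split; auto; lia).
      eapply Hlow; [|eauto]. lia.
  - auto.
  - intros b Hb. destruct (Qo_paths i _ a Ha), (Qo_paths i _ b Hb).
    split; eapply rt_trans; eauto.
  - intros b Hb. unfold Cstep, SCC, restrA in Hb.
    destruct Hb as [_ [[_ [Zb nDb]] [Hab Hba]]].
    set (Yk := fun x => Q (S r0) x /\ x <> Gn i r0).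
    assert (Hsub : subset (fun x => Q (S r0) x /\ ~ Dset RR E (Q (S r0)) x) Yk).
    { intros x [Zx nDx]; split; auto. intros ->. apply nDx. split; auto.
      exists (Hn i r0); simpl; repeat split; auto. lia. }
    assert (Yb : Yk b) by (apply Hsub; split; auto).
    apply (restr_mono node RR _ _ Hsub) in Hab.
    apply (restr_mono node RR _ _ Hsub) in Hba.
    destruct Yb as [Qb Nb].
    destruct b; simpl in Qb |- *; try contradiction.
    + auto.
    + destruct Qb as [e0 _]; elim_idx. split; auto. destruct r0; [|lia].
      exfalso. assert (a = Yn i) as ->.
      { destruct a; simpl in Ha; try lia; try contradiction; intuition; subst; auto; lia. }
      apply (no_in node) in Hba; [discriminate|].
      intros y [Ry [[_ Ny] _]]. destruct y; simpl in Ry; try contradiction.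
      destruct Ry as [e0 e1]; elim_idx; subst. apply Ny; auto.
    + destruct Qb as [e0 Hk]; elim_idx. split; auto. destruct (Nat.eq_dec k r0); [subst; congruence|lia].
    + destruct Qb as [e0 Hk]; elim_idx. split; auto. destruct (Nat.eq_dec (S k) r0) as [e|e]; [|lia].
      exfalso. apply (no_in node) in Hab.
      * subst. simpl in Ha. lia.
      * intros y [Ry [[_ Ny] _]]. destruct y; simpl in Ry; try contradiction.
        destruct Ry as [e0 e']; elim_idx. apply Ny. f_equal; lia.
Qed.

Lemma C4 r1 : S r1 < m -> E (Hn i (S r1)) ->
  set_eq (Cstep AA RR E (Hn i r1) (Q (S (S r1)))) (single (Hn i r1)).
Proof.
  intros Hr HS. apply (Cstep_eq node RR).
  - intros b ->. split; [simpl; auto|].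
    intros [_ [c [Ec [nZc Rcb]]]]. destruct c; simpl in Rcb; try contradiction.
    destruct Rcb; subst; apply nZc; simpl; auto.
  - reflexivity.
  - intros b ->; split; apply rt_refl.
  - intros b Hb. unfold Cstep, SCC, restrA in Hb.
    destruct Hb as [_ [_ [_ Hba]]]. apply (no_in node) in Hba; auto.
    intros y [Ry [[Zy nDy] _]]. destruct y; simpl in Ry; try contradiction.
    destruct Ry as [e0 e]; elim_idx. apply nDy. split; [simpl; auto|].
    exists (Hn i (S r1)). simpl. repeat split; auto; lia.
Qed.

Hypothesis Htf : tfstg2 AA RR E.

Lemma notG0 : (1 <= m -> E (Hn i 0)) -> ~ E (Gn i 0).
Proof.
  intros H HG. destruct m as [|m'] eqn:Em.
  - apply (Hcf (Nn (S (i + 0))) (Gn i 0)); auto. simpl; lia.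
  - apply (Hcf (Hn i 0) (Gn i 0)); auto. apply H; lia. simpl; auto.
Qed.

Lemma Yn_in : (forall r0, r0 < m -> E (Hn i r0)) -> E (Yn i).
Proof.
  intros Hall.
  destruct (chain_final node RR E (Yn i)
     (fun l => match l with 0 => Zs | S l' => Q (m - l') end) (S m)) as [Xf [Hfin HXf]].
  - apply (seq_sym node RR), full_scc; simpl; auto.
  - intros l Hl. destruct l as [|l'].
    + simpl. rewrite Nat.sub_0_r. apply C1. simpl; auto.
    + simpl. replace (m - l') with (S (m - S l')) by lia.
      apply C3; [lia | apply Hall; lia | simpl; auto].
  - simpl. rewrite Nat.sub_diag.
    assert (HQ0 : set_eq (Q 0) (single (Yn i))).
    { intros x; destruct x; simpl; unfold single; split; intros; try lia; try contradiction;
        try (destruct H; lia); subst; auto; congruence. }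
    eapply (seq_trans node RR). apply (Cstep_ext node RR E (Yn i) _ _ HQ0).
    eapply (seq_trans node RR); [apply single_stop|apply (seq_sym node RR), HQ0].
    intros c Rc _ Ec. destruct c; simpl in Rc; try contradiction. destruct Rc as [e0 e1]; elim_idx; subst.
    exact (notG0 (fun h => Hall 0 h) Ec).
  - intros l Hl Heq. destruct l as [|l'].
    + simpl in Heq. destruct (Heq (Gn i m)) as [_ h]. simpl in h. specialize (h (conj eq_refl I)). lia.
    + simpl in Heq. destruct (Heq (Gn i (m - S l'))) as [_ h]. simpl in h.
      assert (m - S l' < m - l') by lia. specialize (h (conj eq_refl H)). lia.
  - intros l Hl; destruct l; simpl; apply Qo_scc; simpl; auto.
  - simpl; auto.
  - rewrite Nat.sub_diag in HXf. simpl in HXf.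
    apply (singleton_in E (Yn i) Xf Htf Hfin).
    + apply HXf; simpl; auto.
    + intros x Hx. apply HXf in Hx. destruct x; simpl in Hx; try lia; try contradiction;
        try (destruct Hx; lia). subst; auto.
    + simpl; auto.
Qed.

Lemma Hn_in r0 : r0 < m -> (forall r', r0 < r' -> r' < m -> E (Hn i r')) -> E (Hn i r0).
Proof.
  intros Hr Hhigh.
  assert (HnotG : ~ E (Gn i (S r0))).
  { intros HG. destruct (Nat.eq_dec (S r0) m) as [e|e].
    - apply (Hcf (Nn (S (i + m))) (Gn i (S r0))); auto. simpl; lia.
    - apply (Hcf (Hn i (S r0)) (Gn i (S r0))); auto. apply Hhigh; lia. simpl; auto. }
  set (X := fun l => match l with 0 => Zs | S l' =>
              if l' <? m - r0 - 1 then Q (m - l') else single (Hn i r0) end).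
  destruct (chain_final node RR E (Hn i r0) X (S (m - r0 - 1))) as [Xf [Hfin HXf]].
  - apply (seq_sym node RR), full_scc; simpl; auto.
  - intros l Hl. destruct l as [|l'].
    + simpl. destruct (Nat.ltb_spec 0 (m - r0 - 1)).
      * rewrite Nat.sub_0_r. apply C1. simpl; split; auto; lia.
      * replace r0 with (m - 1) by lia. apply C2; lia.
    + simpl. destruct (Nat.ltb_spec l' (m - r0 - 1)); [|lia].
      destruct (Nat.ltb_spec (S l') (m - r0 - 1)).
      * replace (m - l') with (S (m - S l')) by lia.
        apply C3; [lia | apply Hhigh; lia | simpl; split; auto; lia].
      * replace (m - l') with (S (S r0)) by lia.
        apply C4; [lia | apply Hhigh; lia].
  - simpl. rewrite Nat.ltb_irrefl. apply single_stop.
    intros c Rc Hne Ec. destruct c; simpl in Rc; try contradiction. destruct Rc as [e0 e1]; elim_idx; subst.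
    auto.
  - intros l Hl Heq. destruct l as [|l'].
    + simpl in Heq. destruct (Nat.ltb_spec 0 (m - r0 - 1)).
      * destruct (Heq (Gn i m)) as [_ h]. simpl in h. specialize (h (conj eq_refl I)). lia.
      * destruct (Heq (Yn i)) as [_ h]. simpl in h. specialize (h eq_refl). discriminate.
    + simpl in Heq. destruct (Nat.ltb_spec l' (m - r0 - 1)); [|lia].
      destruct (Nat.ltb_spec (S l') (m - r0 - 1)).
      * destruct (Heq (Gn i (m - S l'))) as [_ h]. simpl in h.
        assert (m - S l' < m - l') by lia. specialize (h (conj eq_refl H1)). lia.
      * destruct (Heq (Yn i)) as [_ h]. simpl in h. specialize (h eq_refl). discriminate.
  - intros l Hl; destruct l as [|l']; simpl.
    + apply Qo_scc; simpl; auto.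
    + destruct (Nat.ltb_spec l' (m - r0 - 1)).
      * apply Qo_scc; simpl; split; auto; lia.
      * apply single_scc.
  - simpl. rewrite Nat.ltb_irrefl. reflexivity.
  - simpl in HXf. rewrite Nat.ltb_irrefl in HXf.
    apply (singleton_in E (Hn i r0) Xf Htf Hfin).
    + apply HXf; reflexivity.
    + intros x Hx. apply HXf in Hx. auto.
    + simpl; auto.
Qed.

Lemma allH : forall r0, r0 < m -> E (Hn i r0).
Proof.
  assert (forall d r0, r0 < m -> m - r0 <= d -> E (Hn i r0)).
  { induction d; intros r0 Hr Hd; [lia|].
    apply Hn_in; auto. intros r' h1 h2. apply IHd; lia. }
  intros r0 Hr. apply (H (m - r0)); auto.
Qed.

Lemma cascade : E (Yn i).
Proof. apply Yn_in, allH. Qed.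

End Cascade.


Lemma min_exists (P : nat -> Prop) : (exists n, P n) -> exists n, P n /\ forall n', n' < n -> ~ P n'.
Proof.
  intros [n Hn]. revert Hn. induction n as [n IH] using lt_wf_ind. intros Hn.
  destruct (classic (exists n', n' < n /\ P n')) as [[n' [h1 h2]] | Hno].
  - apply (IH n' h1 h2).
  - exists n; split; auto. intros n' h1 h2. apply Hno; eauto.
Qed.

Section Main.
Variable E : node -> Prop.
Hypothesis Htf : tfstg2 AA RR E.

Lemma Ecf : conflict_free RR E.
Proof. destruct Htf as [_ [H _]]; auto. Qed.

Lemma F_N j : ~ E (Yn j) -> E (Nn j).
Proof.
  intros HY.
  destruct (chain_final node RR E (Nn j) (fun _ => single (Nn j)) 0) as [Xf [Hfin HXf]].
  - intros b; split.
    + intros ->. unfold SCC, AA; repeat split; apply rt_refl.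
    + intros [_ [_ [h1 h2]]]. apply rt_lev in h1; apply rt_lev in h2.
      destruct b; simpl in *; try lia. unfold single; f_equal; lia.
  - intros; lia.
  - apply single_stop. intros c Rc _ Ec. destruct c; simpl in Rc; try contradiction. subst; auto.
  - intros; lia.
  - intros; apply single_scc.
  - reflexivity.
  - apply (singleton_in E (Nn j) Xf Htf Hfin).
    + apply HXf; reflexivity.
    + intros x Hx; apply HXf in Hx; auto.
    + simpl; auto.
Qed.

Lemma F_a i : (forall k, ~ E (Nn (S (i + k)))) -> ~ E (Yn i).
Proof.
  intros Hno HY.
  destruct (chain_final node RR E (Yn i) (fun _ => Qo i None) 0) as [Xf [Hfin HXf]].
  - apply (seq_sym node RR), full_scc; simpl; auto.
  - intros; lia.
  - apply (Cstep_eq node RR).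
    + intros b Hb; split; auto. intros [_ [c [Ec [nZc Rcb]]]].
      destruct c, b; simpl in Rcb, Hb, nZc; try contradiction; decompose [and] Rcb; decompose [and] Hb; subst.
      all: try (apply nZc; repeat split; auto; lia).
      eapply Hno; eauto.
    + simpl; auto.
    + intros b Hb. destruct (Qo_paths i None (Yn i) eq_refl), (Qo_paths i None b Hb).
      split; auto.
    + intros b Hb. eapply Cstep_sub; eauto.
  - intros; lia.
  - intros; apply Qo_scc; simpl; auto.
  - simpl; auto.
  - destruct Htf as [_ [Hcf Hall]].
    destruct (Hall (Yn i) I Xf Hfin) as [Hn | [_ [_ Hnot]]].
    { apply Hn, HXf; simpl; auto. }
    apply Hnot. exists (fun x => exists k, x = Gn i k).
    assert (Hplus : forall x, Xf x -> plus (restrR RR Xf) (fun x => exists k, x = Gn i k) x).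
    { intros x Hx. pose proof Hx as Hx'. apply HXf in Hx'.
      destruct x as [i0|i0|i0 k|i0 k|j]; simpl in Hx'; try contradiction;
        (lazymatch type of Hx' with _ /\ _ => destruct Hx' as [Hx' _] | _ => idtac end); subst i0.
      - right. exists (Gn i 0). split; [eauto|]. repeat split; auto. apply HXf; simpl; auto.
      - right. exists (Gn i 0). split; [eauto|]. repeat split; auto. apply HXf; simpl; auto.
      - left; eauto.
      - right. exists (Gn i (S k)). split; [eauto|]. repeat split; auto. apply HXf; simpl; auto. }
    split; [|split].
    + intros x [k ->]. split; [exact I|]. apply HXf; simpl; auto.
    + intros x y [k ->] [k' ->] [h _]. simpl in h; auto.
    + split.
      * intros x [[Ex Xx] | [y [[Ey Xy] [Ryx [_ Xx]]]]]; apply Hplus; auto.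
      * intros Hs. assert (XT : Xf (Tn i)) by (apply HXf; simpl; auto).
        destruct (Hs (Tn i) (Hplus _ XT)) as [[ET _] | [y [[Ey _] [Ry _]]]].
        -- apply (Hcf (Tn i) (Tn i)); simpl; auto.
        -- destruct y; simpl in Ry; try contradiction.
           all: first [ exact (Hcf _ _ Ey HY Ry) | exact (Hcf _ _ Ey Ey eq_refl) ].
Qed.

Lemma F_b i j : i < j -> ~ E (Yn j) -> E (Yn i).
Proof.
  intros Hij HY.
  destruct (min_exists (fun j => i < j /\ ~ E (Yn j))) as [j0 [[h1 h2] hmin]]; [eauto|].
  pose (m := j0 - i - 1).
  apply (cascade E Ecf i m).
  - replace (S (i + m)) with j0 by (unfold m; lia). apply F_N; auto.
  - intros k Hk HN. assert (E (Yn (S (i + k)))).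
    { apply NNPP; intros HnY. apply (hmin (S (i + k))); [unfold m in Hk; lia|]. split; [lia|auto]. }
    apply (Ecf (Yn (S (i + k))) (Nn (S (i + k)))); simpl; auto.
  - auto.
Qed.

Lemma contra : False.
Proof.
  destruct (classic (forall j, E (Yn j))) as [Hall | Hnot].
  - apply (F_a 0); [|auto]. intros k HN.
    apply (Ecf (Yn (S (0 + k))) (Nn (S (0 + k)))); simpl; auto.
  - apply not_all_ex_not in Hnot. destruct Hnot as [k Hk].
    assert (Hup : forall j, k < j -> E (Yn j)).
    { intros j Hj. apply NNPP; intros Hn. apply Hk. apply (F_b k j); auto. }
    apply (F_a (S k)).
    + intros k' HN. apply (Ecf (Yn (S (S k + k'))) (Nn (S (S k + k')))); simpl; auto.
      apply Hup; lia.
    + apply Hup; lia.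
Qed.

End Main.

Theorem theorem2 :
  exists (U : Type) (A : U -> Prop) (R : U -> U -> Prop),
    is_AF A R /\ finitary A R /\ forall S : U -> Prop, ~ tfstg2 A R S.
Proof.
  exists node, AA, RR. split; [|split].
  - intros a b _; split; exact I.
  - intros b _. destruct b.
    + exists [Gn i 0]. intros a Ra; destruct a; simpl in Ra; try contradiction; decompose [and] Ra; subst; simpl; auto.
    + exists [Gn i 0; Tn i]. intros a Ra; destruct a; simpl in Ra; try contradiction; decompose [and] Ra; subst; simpl; auto.
    + exists [Yn i; Hn i k; Tn i; Nn (S (i + k))].
      intros a Ra; destruct a; simpl in Ra; try contradiction; decompose [and] Ra; subst; simpl; auto 6.
    + exists [Gn i (S k)]. intros a Ra; destruct a; simpl in Ra; try contradiction; decompose [and] Ra; subst; simpl; auto.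
    + exists [Yn j]. intros a Ra; destruct a; simpl in Ra; try contradiction; decompose [and] Ra; subst; simpl; auto.
  - intros E H. exact (contra E H).
Qed.
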